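(* Let $\Sigma$ be a set of prime numbers, $S$ the multiplicative submonoid of $\mathbb{N}$ generated by $\Sigma$, $\mathbb{Z}[S^{-1}]\subset\mathbb{Q}$ the localization. Let $M$ be a locally compact topological $\mathbb{Z}[S^{-1}]$-module whose underlying group is $(M,+)=\mathbb{R}^n\times H$ for some $n\ge0$ and some locally compact abelian group $H$ containing a compact open subgroup. Then $\mathbb{R}^n\times 0$ is a (closed) $\mathbb{Z}[S^{-1}]$-submodule of $M$; in particular $H$ is also a $\mathbb{Z}[S^{-1}]$-module, as a quotient of $M$.
   Context: All topological groups are Hausdorff; $\mathbb{Z}[S^{-1}]$ is discrete and a locally compact topological $\mathbb{Z}[S^{-1}]$-module is a locally compact abelian group with a $\mathbb{Z}[S^{-1}]$-module structure with continuous scalar multiplication. *)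

(* Defs.v *)
From HB Require Import structures.
From mathcomp Require Import all_boot all_order all_algebra.
From mathcomp Require Import all_classical all_reals all_analysis.
Set Implicit Arguments. Unset Strict Implicit. Unset Printing Implicit Defensive.
Import Order.TTheory GRing.Theory Num.Theory.
Import numFieldNormedType.Exports.
Local Open Scope classical_set_scope.
Local Open Scope ring_scope.

(* S = multiplicative submonoid of nat generated by the set of primes Sigma:
   the positive integers all of whose prime divisors lie in Sigma. *)
Definition in_monoid_gen (Sigma : set nat) (s : nat) : Prop :=
  (0 < s)%N /\ forall p : nat, prime p -> (p %| s)%N -> Sigma p.

Definition in_ZSinv (Sigma : set nat) (q : rat) : Prop :=
  exists s : nat, in_monoid_gen Sigma s /\ (s%:Q * q) \is a Num.int.

(* A topological Z[S^-1]-module structure on the topological abelian group M,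
   given by the scalar action act : Q -> M -> M (only its values on Z[S^-1]
   matter).  Since Z[S^-1] is discrete, continuity of scalar multiplication
   Z[S^-1] x M -> M is continuity of each map x |-> act q x. *)
Definition is_top_ZSinv_module (Sigma : set nat) (M : topologicalType)
  (add : M -> M -> M) (act : rat -> M -> M) : Prop :=
  [/\ forall x, act 1 x = x,
      forall a b x, in_ZSinv Sigma a -> in_ZSinv Sigma b ->
        act (a + b) x = add (act a x) (act b x),
      forall a b x, in_ZSinv Sigma a -> in_ZSinv Sigma b ->
        act (a * b) x = act a (act b x),
      forall a x y, in_ZSinv Sigma a -> act a (add x y) = add (act a x) (act a y)
    & forall a, in_ZSinv Sigma a -> continuous (act a)].

Definition has_compact_open_subgroup (H : topologicalZmodType) : Prop :=
  exists K : set H, [/\ compact K, open K, K 0 &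
    forall x y, K x -> K y -> K (x - y)].

(* Main.v *)
Require Import Defs.
From HB Require Import structures.
From mathcomp Require Import all_boot all_order all_algebra.
From mathcomp Require Import all_classical all_reals all_analysis.
Import Order.TTheory GRing.Theory Num.Theory.
Import numFieldNormedType.Exports.
Local Open Scope classical_set_scope.
Local Open Scope ring_scope.

Lemma monoid1 Sigma : in_monoid_gen Sigma 1.
Proof. split=> // p pp; rewrite dvdn1 => /eqP p1; by rewrite p1 in pp. Qed.

Lemma ZSinv_int Sigma (m : int) : in_ZSinv Sigma m%:~R.
Proof. exists 1%N; split; first exact: monoid1. by rewrite mul1r intr_int. Qed.

Lemma dbl0 (V : zmodType) (a : V) : a = a + a -> a = 0.
Proof. by move/eqP; rewrite -subr_eq0 opprD addrA subrr sub0r oppr_eq0 => /eqP. Qed.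

Theorem mainTheorem19 (R : realType) (Sigma : set nat)
  (hSigma : forall p, Sigma p -> prime p)
  (n : nat) (H : topologicalZmodType)
  (hH_haus : hausdorff_space H)
  (hH_lc : locally_compact [set: H])
  (hH_cos : has_compact_open_subgroup H)
  (act : rat -> 'rV[R]_n * H -> 'rV[R]_n * H)
  (hact : @is_top_ZSinv_module Sigma ('rV[R]_n * H)%type +%R act) :
  closed [set x : 'rV[R]_n * H | x.2 = 0] /\
  (forall q (v : 'rV[R]_n), in_ZSinv Sigma q -> (act q (v, 0)).2 = 0).
Proof.
split.
  have -> : [set x : 'rV[R]_n * H | x.2 = 0] = snd @^-1` [set 0] by [].
  apply: preimage_closed; last exact: (compact_closed hH_haus (@compact_set1 H 0)).
  move=> x _; exact: cvg_snd.
case: hact => act1 actD actM actDr _.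
have Zn (k : nat) : in_ZSinv Sigma k%:R by have := ZSinv_int Sigma k.
have act0 x : act 0 x = 0.
  by apply: dbl0; have := actD 0 0 x (Zn 0%N) (Zn 0%N); rewrite addr0.
have actn (k : nat) x : act k%:R x = x *+ k.
  elim: k => [|k IH]; first by rewrite act0.
  have -> : (k.+1%:R : rat) = k%:R + 1 by rewrite mulrSr.
  rewrite actD ?Zn //; last exact: (Zn 1%N). by rewrite mulrSr; congr (_ + _); [exact: IH | exact: act1].
have actNn (k : nat) x : act (- k%:R) x = - (x *+ k).
  have := actD (- k%:R) k%:R x; rewrite addNr act0 actn.
  have Zm : in_ZSinv Sigma (- k%:R) by have := ZSinv_int Sigma (- k%:Z); rewrite mulrNz.
  move=> /(_ Zm (Zn k)) /eqP; by rewrite eq_sym addr_eq0 => /eqP.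
have sndn (y : 'rV[R]_n * H) (k : nat) : (y *+ k).2 = y.2 *+ k.
  by elim: k => [|k IH] //; rewrite !mulrS /= IH.
have actint (m : int) v : (act m%:~R (v, 0)).2 = 0.
  case: m => k; first by rewrite actn sndn /= mul0rn.
  by rewrite NegzE mulrNz actNn /= sndn /= mul0rn oppr0.
move=> q v [s [ms /intrP [m hm]]].
have s0 := ms.1.
set y := act q (v, 0).
have hy : y.2 *+ s = 0.
  rewrite -sndn -actn /y -actM ?Zn //; first by rewrite -[_ * q]/(s%:Q * q) hm actint.
  by exists s; split => //; rewrite hm intr_int.
have Zs1 : in_ZSinv Sigma (s%:R^-1).
  exists s; split => //; rewrite -[s%:Q]/(s%:R) mulfV ?intr_int // pnatr_eq0 -lt0n //.
have : act (s%:R^-1 * s%:R) ((0 : 'rV[R]_n), y.2) = 0.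
  rewrite actM ?Zn // actn.
  have -> : ((0 : 'rV[R]_n), y.2) *+ s = 0.
    have pe (a b : 'rV[R]_n * H) : a.1 = b.1 -> a.2 = b.2 -> a = b.
      by case: a; case: b => /= ? ? ? ? -> ->.
    apply: pe; last by rewrite sndn hy.
    by elim: (s) => // k IH; rewrite mulrS /= IH addr0.
  by apply: dbl0; have := actDr (s%:R^-1) 0 0 Zs1; rewrite addr0.
rewrite mulVf ?pnatr_eq0 -?lt0n // act1 => /(congr1 snd) /= ->; reflexivity.
Qed.
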